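(* Let $D$ be a digraph and $k\ge 0$ an integer. If $\operatorname{dbw}(D)\le k$, then $\operatorname{bcrk}(\vec{L}(D))\le 2(k+1)$.
   Context: All digraphs are finite and loopless; $\vec{xy}$ denotes a directed edge from $x$ to $y$. A layout of a symmetric function $f:2^U\to\mathbb{Z}$ on a finite set $U$ is a pair $(T,\beta)$ with $T$ a tree of maximum degree at most three and $\beta$ a bijection from the leaves of $T$ to $U$; each edge of $T$ splits the leaves into two sides, with $Y$ the leaves on one side, and its order is $f(\beta(Y))$; the width of the layout is the maximum order of its edges (0 if none), and the layout-$f$-width of $U$ is the minimum width of a layout. Directed branch-width: for $X\subseteq E(D)$, $S^V_X=\{y: \exists x,z,\ \vec{xy}\in E(D)\setminus X,\ \vec{yz}\in X\}$ and $f_D(X)=|S^V_X\cup S^V_{E(D)\setminus X}|$; $\operatorname{dbw}(D)$ is the layout-$f_D$-width of $E(D)$. Directed line graph: $\vec{L}(D)$ has vertex set $E(D)$ and an edge $\vec{ef}$ whenever $e=\vec{wx}$, $f=\vec{xy}$ for some vertices $w,x,y$. Bi-cut-rank-width: with $M$ the $\mathrm{GF}(2)$ adjacency matrix of a digraph $H$ ($M_{uv}=1$ iff $\vec{uv}\in E(H)$), $g(X)=\operatorname{rk}(M[V(H)\setminus X,X])+\operatorname{rk}(M[X,V(H)\setminus X])$, and $\operatorname{bcrk}(H)$ is the layout-$g$-width of $V(H)$. *)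

(* Defs.v *)
From HB Require Import structures.
From mathcomp Require Import all_boot all_order all_algebra.
Set Implicit Arguments. Unset Strict Implicit. Unset Printing Implicit Defensive.
Import GRing.Theory.

Definition del_edge (N : finType) (adj : rel N) (v w : N) : rel N :=
  fun a b => adj a b && ~~ (((a == v) && (b == w)) || ((a == w) && (b == v))).

(* A (finite) tree: a symmetric, irreflexive, connected relation in which
   every edge is a bridge (i.e. acyclic).  The empty graph is allowed
   (only relevant when the ground set U is empty). *)
Definition is_tree (N : finType) (adj : rel N) : Prop :=
  [/\ symmetric adj, irreflexive adj,
      (forall x y, connect adj x y) &
      (forall v w, adj v w -> ~~ connect (del_edge adj v w) w v)].

Definition degree (N : finType) (adj : rel N) (v : N) : nat :=
  #|[set w | adj v w]|.

(* leaves: nodes of degree at most one (degree 0 only for a one-node tree) *)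
Definition leaves (N : finType) (adj : rel N) : {set N} :=
  [set v | degree adj v <= 1].

Definition side (N : finType) (adj : rel N) (v w : N) : {set N} :=
  [set x | connect (del_edge adj v w) w x].

(* A layout (T, beta) of f on U with T = (N, adj): T is a tree of maximum
   degree at most three, beta restricted to the leaves is a bijection onto U.
   "layout-f-width of U is at most k" <-> some layout has width <= k, i.e.
   every tree edge has order <= k (width 0 if there is no edge). *)
Definition layout_width_le (U : finType) (f : {set U} -> nat) (k : nat) : Prop :=
  exists (N : finType) (adj : rel N) (beta : N -> U),
    [/\ is_tree adj,
        (forall v, degree adj v <= 3),
        {in leaves adj &, injective beta},
        (forall u, exists2 v, v \in leaves adj & beta v = u) &
        (forall v w, adj v w ->
           f [set beta x | x in leaves adj :&: side adj v w] <= k)].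

(* A digraph on a finite vertex type V is a loopless relation E (simple). *)

Definition dedge (V : finType) (E : rel V) := {p : V * V | E p.1 p.2}.

Definition SV (V : finType) (E : rel V) (X : {set dedge E}) : {set V} :=
  [set y | [exists e : dedge E, exists f : dedge E,
     [&& e \notin X, f \in X, (val e).2 == y & (val f).1 == y]]].

Definition fD (V : finType) (E : rel V) (X : {set dedge E}) : nat :=
  #|SV X :|: SV (~: X)|.

Definition dbw_le (V : finType) (E : rel V) (k : nat) : Prop :=
  layout_width_le (@fD V E) k.

(* Directed line graph: vertex set E(D), edge e -> f iff head e = tail f. *)
Definition line_rel (V : finType) (E : rel V) : rel (dedge E) :=
  fun e f => (val e).2 == (val f).1.

Definition cutrk (H : finType) (adj : rel H) (A B : {set H}) : nat :=
  \rank (\matrix_(i < #|A|, j < #|B|)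
           ((adj (enum_val i) (enum_val j))%:R : 'F_2))%R.

Definition gH (H : finType) (adj : rel H) (X : {set H}) : nat :=
  cutrk adj (~: X) X + cutrk adj X (~: X).

Definition bcrk_le (H : finType) (adj : rel H) (k : nat) : Prop :=
  layout_width_le (gH adj) k.

(* Main.v *)
Require Import Defs.
From mathcomp Require Import all_boot all_order all_algebra.
Import GRing.Theory.
Local Open Scope ring_scope.

Lemma key (V : finType) (E : rel V) (X Y : {set dedge E}) (S : {set V}) :
  (forall e f, e \in X -> f \in Y -> line_rel e f -> (val e).2 \in S) ->
  (cutrk (@line_rel V E) X Y <= #|S|)%N.
Proof.
move=> HS; rewrite /cutrk.
set A := \matrix_(i < #|X|, s < #|S|)
   ((((val (enum_val i)).2 == enum_val s) : nat)%:R : 'F_2).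
set B := \matrix_(s < #|S|, j < #|Y|)
   (((enum_val s == (val (enum_val j)).1) : nat)%:R : 'F_2).
set M := (X in \rank X).
have -> : M = A *m B.
  apply/matrixP => i j; rewrite !mxE.
  under eq_bigr => s _ do rewrite !mxE.
  have eX : enum_val i \in X by apply: enum_valP.
  have fY : enum_val j \in Y by apply: enum_valP.
  case: (boolP ((val (enum_val i)).2 \in S)) => Hin.
    rewrite (bigD1 (enum_rank_in Hin (val (enum_val i)).2)) //=.
    rewrite big1 ?addr0; last first.
      move=> s Hs; case: eqP => [Eq|]; last by rewrite mul0r.
      by move: Hs; rewrite -[s](enum_valK_in Hin) -Eq eqxx.
    by rewrite enum_rankK_in // eqxx mul1r.
  rewrite big1; last first.
    move=> s _; case: eqP => [Eq|]; last by rewrite mul0r.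
    by move: Hin; rewrite Eq enum_valP.
  case Hl: (line_rel _ _) => //.
  by move: Hin; rewrite (HS _ _ eX fY Hl).
apply: leq_trans (mxrankM_maxr _ _) _.
exact: rank_leq_row.
Qed.

Lemma gH_le (V : finType) (E : rel V) (X : {set dedge E}) :
  (gH (@line_rel V E) X <= fD X + fD X)%N.
Proof.
rewrite /gH /fD; apply: leq_add.
  apply: (leq_trans _ (subset_leq_card (subsetUl _ _))).
  apply: key => e f; rewrite in_setC => eX fX Hl.
  rewrite inE; apply/existsP; exists e; apply/existsP; exists f.
  by rewrite eX fX eqxx /=; move/eqP: Hl => ->.
apply: (leq_trans _ (subset_leq_card (subsetUr _ _))).
apply: key => e f; rewrite in_setC => eX fX Hl.
rewrite inE; apply/existsP; exists e; apply/existsP; exists f.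
by rewrite in_setC negbK eX in_setC fX eqxx /=; move/eqP: Hl => ->.
Qed.

Local Close Scope ring_scope.

Theorem mainTheorem2 (V : finType) (E : rel V) (k : nat) :
  irreflexive E -> dbw_le E k -> bcrk_le (@line_rel V E) (2 * (k + 1)).
Proof.
move=> _ [N [adj [beta [T D I S W]]]].
exists N, adj, beta; split => // v w vw.
apply: leq_trans (gH_le _ _ _) _.
have := W v w vw; rewrite /= => H.
rewrite mulSn mul1n; apply: leq_add; apply: leq_trans H (leq_addr _ _).
Qed.
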